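(* Let $\sigma_1=\sigma_x,\sigma_2=\sigma_y,\sigma_3=\sigma_z$ and, for $\underline{\lambda}\in\mathbb{R}^3$, $U_{\underline{\lambda}}=\exp\{-i\sum_{j=1}^3\lambda_j\,\sigma_j\otimes\sigma_j\}$. Let the probe be $|\psi_0\rangle=(\alpha,\ \beta e^{i\phi_\beta},\ \gamma e^{i\phi_\gamma},\ \delta e^{i\phi_\delta})^T$ in the computational basis $\{|00\rangle,|01\rangle,|10\rangle,|11\rangle\}$, with $\alpha,\beta,\gamma,\delta\in[0,1]$, $\alpha^2+\beta^2+\gamma^2+\delta^2=1$, $\phi_\beta,\phi_\gamma,\phi_\delta\in[0,2\pi)$, and let $Q$ be the quantum Fisher information matrix of the model $\underline{\lambda}\mapsto U_{\underline{\lambda}}|\psi_0\rangle$. Then $$\mathrm{Det}[Q]=1024\left[\alpha^4+\delta^4-2\alpha^2\delta^2\cos 2\phi_\delta\right]\left[\beta^4+\gamma^4-2\beta^2\gamma^2\cos\big(2(\phi_\beta-\phi_\gamma)\big)\right],$$ and, whenever $Q$ is invertible, $$\mathrm{Tr}[Q^{-1}]=\frac{3}{16}\left(\frac{\alpha^2+\delta^2}{\alpha^4-2\alpha^2\delta^2\cos 2\phi_\delta+\delta^4}+\frac{\beta^2+\gamma^2}{\beta^4-2\beta^2\gamma^2\cos\big(2(\phi_\beta-\phi_\gamma)\big)+\gamma^4}\right).$$ In particular both quantities are independent of $\underline{\lambda}$.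
   Context: For a pure-state model $\underline{\lambda}\mapsto|\psi_{\underline{\lambda}}\rangle$, with $\partial_j=\partial/\partial\lambda_j$, the quantum Fisher information matrix is $Q_{jk}=4\,\mathrm{Re}\big[\langle\partial_j\psi|\partial_k\psi\rangle-\langle\partial_j\psi|\psi\rangle\langle\psi|\partial_k\psi\rangle\big]$, $j,k\in\{1,2,3\}$. *)

(* Defs.v *)
From HB Require Import structures.
From mathcomp Require Import all_boot all_order all_algebra.
From mathcomp Require Import complex.
From mathcomp Require Import all_classical all_reals all_analysis.
Set Implicit Arguments. Unset Strict Implicit. Unset Printing Implicit Defensive.
Import Order.TTheory GRing.Theory Num.Theory numFieldNormedType.Exports.
Local Open Scope ring_scope.
Local Open Scope complex_scope.

Section QFI.
Variable R : realType.
Local Notation C := (R[i]).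

Definition iu : C := Complex 0 1.

Definition expmx_partial (A : 'M[C]_4) (N : nat) : 'M[C]_4 :=
  \sum_(k < N) ((k`!)%:R)^-1 *: A ^+ k.
Definition expmx (A : 'M[C]_4) : 'M[C]_4 :=
  \matrix_(i, j)
    Complex (limn (fun N => complex.Re (expmx_partial A N i j)))
            (limn (fun N => complex.Im (expmx_partial A N i j))).

Definition sigma_x : 'M[C]_2 := \matrix_(i, j) (if i == j then 0 else 1).
Definition sigma_y : 'M[C]_2 :=
  \matrix_(i, j) (if i == j then 0 else if (i : nat) == 0%N then - iu else iu).
Definition sigma_z : 'M[C]_2 :=
  \matrix_(i, j) (if i == j then (if (i : nat) == 0%N then 1 else -1) else 0).
Definition pauli (j : 'I_3) : 'M[C]_2 :=
  match (j : nat) with 0%N => sigma_x | 1%N => sigma_y | _ => sigma_z end.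

(* Kronecker product of 2x2 matrices; basis index 2*a+b <-> |a b>, i.e.
   computational basis ordered |00>,|01>,|10>,|11>. *)
Definition kron2 (A B : 'M[C]_2) : 'M[C]_4 :=
  \matrix_(i, j) (A (inord (i %/ 2)) (inord (j %/ 2)) *
                  B (inord (i %% 2)) (inord (j %% 2))).

Definition Ulam (lam : 'rV[R]_3) : 'M[C]_4 :=
  expmx (- iu *: \sum_(j < 3) (lam 0 j)%:C *: kron2 (pauli j) (pauli j)).

Definition partial (F : 'rV[R]_3 -> R) (j : 'I_3) (lam : 'rV[R]_3) : R :=
  derive1 (fun t : R => F (lam + t *: delta_mx 0 j)) 0.

Definition dvec n (psi : 'rV[R]_3 -> 'cV[C]_n) (j : 'I_3) (lam : 'rV[R]_3)
  : 'cV[C]_n :=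
  \col_k Complex (partial (fun l => complex.Re (psi l k 0)) j lam)
                 (partial (fun l => complex.Im (psi l k 0)) j lam).

Definition braket n (u v : 'cV[C]_n) : C := \sum_(k < n) (u k 0)^* * v k 0.

Definition qfi n (psi : 'rV[R]_3 -> 'cV[C]_n) (lam : 'rV[R]_3) : 'M[R]_3 :=
  \matrix_(j, k)
    (4 * complex.Re (braket (dvec psi j lam) (dvec psi k lam)
             - braket (dvec psi j lam) (psi lam) * braket (psi lam) (dvec psi k lam))).

Definition expi (phi : R) : C := Complex (cos phi) (sin phi).

Definition probe (a b g d pb pg pd : R) : 'cV[C]_4 :=
  \col_k [:: a%:C; b%:C * expi pb; g%:C * expi pg; d%:C * expi pd]`_k.

Definition model (a b g d pb pg pd : R) (lam : 'rV[R]_3) : 'cV[C]_4 :=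
  Ulam lam *m probe a b g d pb pg pd.

End QFI.

(* Main.v *)
Require Import Defs.
From HB Require Import structures.
From mathcomp Require Import all_boot all_order all_algebra.
From mathcomp Require Import complex.
From mathcomp Require Import all_classical all_reals all_analysis.
From mathcomp Require Import ring lra.
Import Order.TTheory GRing.Theory Num.Theory numFieldNormedType.Exports.
Local Open Scope ring_scope.
Local Open Scope complex_scope.


Section S.
Variable R : realType.
Local Notation C := (R[i]).
Local Notation cRe := complex.Re.
Local Notation cIm := complex.Im.

Lemma ReD (x y : C) : cRe (x + y) = cRe x + cRe y. Proof. case: x => a b; case: y => c d. by []. Qed.
Lemma ImD (x y : C) : cIm (x + y) = cIm x + cIm y. Proof. by case: x; case: y. Qed.
Lemma ReN (x : C) : cRe (- x) = - cRe x. Proof. by case: x. Qed.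
Lemma ImN (x : C) : cIm (- x) = - cIm x. Proof. by case: x. Qed.
Lemma ReM (x y : C) : cRe (x * y) = cRe x * cRe y - cIm x * cIm y. Proof. by case: x; case: y. Qed.
Lemma ImM (x y : C) : cIm (x * y) = cRe x * cIm y + cIm x * cRe y. Proof. by case: x => a b; case: y => c d /=; ring. Qed.
Lemma ReR (r : R) : cRe (r%:C) = r. Proof. by []. Qed.
Lemma ImR (r : R) : cIm (r%:C) = 0. Proof. by []. Qed.
Lemma Re0 : cRe (0 : C) = 0. Proof. by []. Qed.
Lemma Im0 : cIm (0 : C) = 0. Proof. by []. Qed.
Lemma Re1 : cRe (1 : C) = 1. Proof. by []. Qed.
Lemma Im1 : cIm (1 : C) = 0. Proof. by []. Qed.
Lemma Reiu : cRe (iu R) = 0. Proof. by []. Qed.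
Lemma Imiu : cIm (iu R) = 1. Proof. by []. Qed.
Lemma ReC (a b : R) : cRe (Complex a b) = a. Proof. by []. Qed.
Lemma ImC (a b : R) : cIm (Complex a b) = b. Proof. by []. Qed.
Lemma ReJ (x : C) : cRe (x^*) = cRe x. Proof. by case: x. Qed.
Lemma ImJ (x : C) : cIm (x^*) = - cIm x. Proof. by case: x. Qed.
Lemma Re_sum I (r : seq I) (P : pred I) (F : I -> C) :
  cRe (\sum_(i <- r | P i) F i) = \sum_(i <- r | P i) cRe (F i).
Proof. by elim/big_rec2: _ => // i x y _ <-; rewrite ReD. Qed.
Lemma Im_sum I (r : seq I) (P : pred I) (F : I -> C) :
  cIm (\sum_(i <- r | P i) F i) = \sum_(i <- r | P i) cIm (F i).
Proof. by elim/big_rec2: _ => // i x y _ <-; rewrite ImD. Qed.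
Lemma CeqP (x y : C) : cRe x = cRe y -> cIm x = cIm y -> x = y.
Proof. by case: x; case: y => /= a b c d -> ->. Qed.

Definition ReIm := (ReD, ImD, ReN, ImN, ReM, ImM, ReR, ImR, Re0, Im0, Re1, Im1, Reiu, Imiu, ReJ, ImJ).

Definition bt (m i : 'I_4) : R :=
  match nat_of_ord m, nat_of_ord i with
  | 0%N, 0%N => 1 | 0%N, 3%N => 1 | 1%N, 0%N => 1 | 1%N, 3%N => -1
  | 2%N, 1%N => 1 | 2%N, 2%N => 1 | 3%N, 1%N => 1 | 3%N, 2%N => -1 | _, _ => 0 end.
Definition sg (m : 'I_4) (j : 'I_3) : R :=
  match nat_of_ord m, nat_of_ord j with
  | 0%N, 1%N => -1 | 1%N, 0%N => -1 | 2%N, 2%N => -1 | 3%N, _ => -1 | _, _ => 1 end.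
Definition mu (m : 'I_4) (lam : 'rV[R]_3) : R := \sum_(j < 3) sg m j * lam 0 j.
Definition P (m : 'I_4) : 'M[C]_4 := \matrix_(i, k) ((bt m i * bt m k / 2)%:C).

Lemma inordE2 (a b : nat) : (a < 2)%N -> (b < 2)%N ->
  ((inord a : 'I_2) == inord b) = (a == b).
Proof. by move=> ha hb; rewrite -val_eqE /= !inordK. Qed.
Lemma inordv2 (a : nat) : (a < 2)%N -> nat_of_ord (inord a : 'I_2) = a.
Proof. by move=> ha; rewrite inordK. Qed.

Lemma Hdecomp (lam : 'rV[R]_3) :
  \sum_(j < 3) (lam 0 j)%:C *: kron2 (pauli R j) (pauli R j) = \sum_(m < 4) (mu m lam)%:C *: P m.
Proof.
apply/matrixP => i k; rewrite !summxE !big_ord_recr !big_ord0 /= !mxE /mu.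
rewrite !big_ord_recr !big_ord0 /=.
case: i => [[|[|[|[|i]]]] Hi] //; case: k => [[|[|[|[|k]]]] Hk] //=.
all: rewrite ?mxE /= ?inordE2 // ?inordv2 //=.
all: try (rewrite /bt /sg /=; ring).
all: by apply: CeqP; rewrite !ReIm /bt /sg /=; field.
Qed.

Lemma dot_bt (m n : 'I_4) : \sum_(k < 4) bt m k * bt n k = if m == n then 2 else 0.
Proof.
rewrite !big_ord_recr big_ord0 /=.
case: m => [[|[|[|[|m]]]] Hm] //; case: n => [[|[|[|[|n]]]] Hn] //=.
all: rewrite /bt /=; ring.
Qed.

Lemma PP (m n : 'I_4) : P m *m P n = if m == n then P m else 0.
Proof.
apply/matrixP => i j; rewrite !mxE.
under eq_bigr => k _ do rewrite !mxE -rmorphM.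
rewrite -rmorph_sum.
have -> : \sum_(k < 4) (bt m i * bt m k / 2 * (bt n k * bt n j / 2)) =
   bt m i * bt n j / 2 / 2 * \sum_(k < 4) bt m k * bt n k.
  by rewrite mulr_sumr; apply: eq_bigr => k _; ring.
rewrite dot_bt; case: eqP => [->|_]; rewrite !mxE //.
  by congr (_ %:C); field.
by rewrite mulr0.
Qed.

Lemma sumP : \sum_(m < 4) P m = 1.
Proof.
apply/matrixP => i j; rewrite summxE !big_ord_recr big_ord0 /= !mxE.
case: i => [[|[|[|[|i]]]] Hi] //; case: j => [[|[|[|[|j]]]] Hj] //=.
all: by apply: CeqP; rewrite /= ?ReIm /bt /=; field.
Qed.

End S.

Section S2.
Variable R : realType.
Local Notation C := (R[i]).
Local Notation cRe := complex.Re.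
Local Notation cIm := complex.Im.
Local Notation P := (@P R).
Local Notation bt := (@bt R).
Local Notation sg := (@sg R).
Local Notation mu := (@mu R).

Lemma powA (c : 'I_4 -> C) (k : nat) :
  (\sum_(m < 4) c m *: P m) ^+ k = \sum_(m < 4) (c m ^+ k) *: P m.
Proof.
elim: k => [|k IH].
  by rewrite expr0 -sumP; apply: eq_bigr => m _; rewrite expr0 scale1r.
rewrite exprSr IH -mulmxE mulmx_suml; apply: eq_bigr => m _.
rewrite mulmx_sumr (bigD1 m) //= big1 ?addr0.
  by rewrite -scalemxAl -scalemxAr PP eqxx scalerA exprSr.
by move=> n /negbTE nm; rewrite -scalemxAl -scalemxAr PP eq_sym nm !scaler0.
Qed.

Lemma Adecomp (lam : 'rV[R]_3) :
  - iu R *: \sum_(j < 3) (lam 0 j)%:C *: kron2 (pauli R j) (pauli R j) =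
  \sum_(m < 4) (- iu R * (mu m lam)%:C) *: P m.
Proof. by rewrite Hdecomp scaler_sumr; apply: eq_bigr => m _; rewrite scalerA. Qed.

Lemma partialE (c : 'I_4 -> C) N :
  expmx_partial (\sum_(m < 4) c m *: P m) N =
  \sum_(m < 4) (\sum_(k < N) (k`!%:R)^-1 * c m ^+ k) *: P m.
Proof.
rewrite /expmx_partial.
under eq_bigr => k _ do rewrite powA scaler_sumr.
rewrite exchange_big; apply: eq_bigr => m _ /=; rewrite scaler_suml.
by apply: eq_bigr => k _; rewrite scalerA.
Qed.

Lemma oddhalf k : odd k -> k.-1./2 = k./2.
Proof.
move=> ok; rewrite -{1}(odd_double_half k) ok /=.
by rewrite ?add1n /= doubleK.
Qed.

Lemma powmiu k : (- iu R) ^+ k =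
  ((~~ odd k)%:R * (-1) ^+ k./2)%:C - iu R * ((odd k)%:R * (-1) ^+ k.-1./2)%:C.
Proof.
have hm : (- iu R) ^+ 2 = -1 by apply: CeqP; rewrite expr2 !ReIm; ring.
rewrite -{1}(odd_double_half k) exprD -mul2n exprM hm.
have -> : (-1 : C) ^+ k./2 = ((-1 : R) ^+ k./2)%:C by rewrite rmorphXn rmorphN1.
case ok : (odd k).
  rewrite oddhalf // (_ : nat_of_bool true = 1%N) // expr1.
  rewrite (_ : (~~ true)%:R = 0 :> R) // (_ : true%:R = 1 :> R) //.
  by apply: CeqP; rewrite !ReIm; ring.
rewrite (_ : nat_of_bool false = 0%N) // expr0 mul1r.
rewrite (_ : (~~ false)%:R = 1 :> R) // (_ : false%:R = 0 :> R) //.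
by apply: CeqP; rewrite !ReIm; ring.
Qed.

Lemma expser_term (x : R) k :
  (k`!%:R)^-1 * (- iu R * x%:C) ^+ k =
  (cos_coeff x k)%:C - iu R * (sin_coeff x k)%:C.
Proof.
rewrite exprMn powmiu -rmorphXn.
have -> : ((k`!%:R : C)^-1) = ((k`!%:R : R)^-1)%:C by rewrite fmorphV rmorph_nat.
apply: CeqP; rewrite !ReIm /cos_coeff /sin_coeff /=; rewrite ?exprnP; ring.
Qed.

Lemma Re_expser (x : R) N :
  cRe (\sum_(k < N) (k`!%:R)^-1 * (- iu R * x%:C) ^+ k) = series (cos_coeff x) N.
Proof.
rewrite Re_sum /series /= big_mkord; apply: eq_bigr => k _.
by rewrite expser_term !ReIm; ring.
Qed.

Lemma Im_expser (x : R) N :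
  cIm (\sum_(k < N) (k`!%:R)^-1 * (- iu R * x%:C) ^+ k) = - series (sin_coeff x) N.
Proof.
rewrite Im_sum /series /= big_mkord -sumrN; apply: eq_bigr => k _.
by rewrite expser_term !ReIm; ring.
Qed.
End S2.

Section S3.
Variable R : realType.
Local Notation C := (R[i]).
Local Notation cRe := complex.Re.
Local Notation cIm := complex.Im.
Local Notation P := (@P R).
Local Notation bt := (@bt R).
Local Notation sg := (@sg R).
Local Notation mu := (@mu R).


Lemma ReMR (x : C) (r : R) : cRe (x * r%:C) = cRe x * r.
Proof. by rewrite !ReIm mulr0 subr0. Qed.
Lemma ImMR (x : C) (r : R) : cIm (x * r%:C) = cIm x * r.
Proof. by rewrite !ReIm mulr0 add0r. Qed.

Local Open Scope classical_set_scope.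
Lemma lim_sum4 (f : 'I_4 -> nat -> R) (l : 'I_4 -> R) :
  (forall m, f m n @[n --> \oo] --> l m) ->
  limn (fun N => \sum_(m < 4) f m N) = \sum_(m < 4) l m.
Proof.
move=> h; apply: cvg_lim => //; apply: cvg_big => //.
exact: add_continuous.
Qed.

Lemma cvg_cos_ser (x : R) : series (cos_coeff x) @ \oo --> cos x.
Proof. rewrite unlock; exact: is_cvg_series_cos_coeff. Qed.
Lemma cvg_sin_ser (x : R) : series (sin_coeff x) @ \oo --> sin x.
Proof. rewrite unlock; exact: is_cvg_series_sin_coeff. Qed.

Definition ee (m : 'I_4) (lam : 'rV[R]_3) : C :=
  (cos (mu m lam))%:C - iu R * (sin (mu m lam))%:C.

Lemma UlamE (lam : 'rV[R]_3) : Ulam lam = \sum_(m < 4) ee m lam *: P m.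
Proof.
rewrite /Ulam /expmx Adecomp; apply/matrixP => i j; rewrite !mxE summxE.
under eq_fun => N do rewrite partialE summxE Re_sum.
under [X in Complex _ (limn X)]eq_fun => N do rewrite partialE summxE Im_sum.
under eq_fun => N do under eq_bigr => m _ do rewrite mxE mxE ReMR Re_expser.
under [X in Complex _ (limn X)]eq_fun => N do
  under eq_bigr => m _ do rewrite mxE mxE ImMR Im_expser.
rewrite (@lim_sum4 _ (fun m => cos (mu m lam) * (bt m i * bt m j / 2))); last first.
  by move=> m; apply: cvgMr_tmp; exact: cvg_cos_ser.
rewrite (@lim_sum4 _ (fun m => - sin (mu m lam) * (bt m i * bt m j / 2))); last first.
  by move=> m; apply: cvgMr_tmp; apply: cvgN; exact: cvg_sin_ser.
apply: CeqP; rewrite ?ReC ?ImC ?Re_sum ?Im_sum; apply: eq_bigr => m _;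
  rewrite !mxE /ee !ReIm; ring.
Qed.
End S3.

Section S4.
Variable R : realType.
Local Notation C := (R[i]).
Local Notation cRe := complex.Re.
Local Notation cIm := complex.Im.
Local Notation P := (@P R).
Local Notation bt := (@bt R).
Local Notation sg := (@sg R).
Local Notation mu := (@mu R).

Local Notation ee := (@ee R).

Lemma ReJn (x : C) : cRe (Num.conj x) = cRe x. Proof. by case: x. Qed.
Lemma ImJn (x : C) : cIm (Num.conj x) = - cIm x. Proof. by case: x. Qed.
Definition ReIm2 := (ReIm, ReJn, ImJn).
Lemma cjD (x y : C) : Num.conj (x + y) = Num.conj x + Num.conj y.
Proof. by apply: CeqP; rewrite !ReIm2; ring. Qed.
Lemma cjM (x y : C) : Num.conj (x * y) = Num.conj x * Num.conj y.
Proof. by apply: CeqP; rewrite !ReIm2; ring. Qed.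
Lemma cjR (r : R) : Num.conj (r%:C) = r%:C.
Proof. by apply: CeqP; rewrite !ReIm2 ?oppr0. Qed.
Lemma cj0 : Num.conj (0 : C) = 0.
Proof. by apply: CeqP; rewrite !ReIm2 ?oppr0. Qed.
Lemma cj_sum I (r : seq I) (Pr : pred I) (F : I -> C) :
  Num.conj (\sum_(i <- r | Pr i) F i) = \sum_(i <- r | Pr i) Num.conj (F i).
Proof. by elim/big_rec2: _ => [|i x y _ <-]; rewrite ?cj0 ?cjD. Qed.
Lemma RCM (a b : R) : (a * b)%:C = a%:C * b%:C :> C.
Proof. by apply: CeqP; rewrite !ReIm; ring. Qed.
Lemma RCD (a b : R) : (a + b)%:C = a%:C + b%:C :> C.
Proof. by apply: CeqP; rewrite !ReIm; ring. Qed.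
Lemma RCN (a : R) : (- a)%:C = - a%:C :> C.
Proof. by apply: CeqP; rewrite !ReIm; ring. Qed.
Lemma RC0 : (0 : R)%:C = 0 :> C. Proof. by []. Qed.
Lemma RC1 : (1 : R)%:C = 1 :> C. Proof. by []. Qed.
Lemma RC2 : (2 : R)%:C = 2 :> C.
Proof. by rewrite -[2]/(1 + 1) RCD. Qed.
Lemma RC_sum I (r : seq I) (Pr : pred I) (F : I -> R) :
  (\sum_(i <- r | Pr i) F i)%:C = \sum_(i <- r | Pr i) (F i)%:C :> C.
Proof. by elim/big_rec2: _ => [|i x y _ <-]; rewrite ?RC0 ?RCD. Qed.

Lemma numconjE (x : C) : Num.conj x = x^*.
Proof. by case: x. Qed.

Definition V (f z : 'I_4 -> C) : 'cV[C]_4 :=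
  \col_k \sum_(m < 4) f m * (bt m k)%:C * z m.

Lemma braketV (f g z : 'I_4 -> C) :
  braket (V f z) (V g z) = \sum_(m < 4) Num.conj (f m) * g m * (2 * (Num.conj (z m) * z m)).
Proof.
rewrite /braket.
have E : forall k, Num.conj (V f z k 0) * V g z k 0 = \sum_(m < 4) \sum_(n < 4)
    (Num.conj (f m) * Num.conj (z m) * (g n * z n)) * ((bt m k * bt n k)%:C).
  move=> k; rewrite !mxE cj_sum mulr_suml; apply: eq_bigr => m _.
  rewrite mulr_sumr; apply: eq_bigr => n _.
  rewrite !cjM cjR RCM; ring.
under eq_bigr => k _ do rewrite E.
rewrite exchange_big /=; apply: eq_bigr => m _; rewrite exchange_big /=.
under eq_bigr => n _ do rewrite -mulr_sumr -RC_sum dot_bt.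
rewrite (bigD1 m) //= eqxx big1 ?addr0.
  by rewrite RC2; ring.
by move=> n /negbTE; rewrite eq_sym => ->; rewrite RC0 mulr0.
Qed.
End S4.

Section S5.
Variable R : realType.
Local Notation C := (R[i]).
Local Notation cRe := complex.Re.
Local Notation cIm := complex.Im.
Local Notation P := (@P R).
Local Notation bt := (@bt R).
Local Notation sg := (@sg R).
Local Notation mu := (@mu R).

Local Notation ee := (@ee R).
Local Notation V := (@V R).

Lemma is_derive_lin (mu0 s : R) : is_derive (0:R) 1 (fun t : R => mu0 + s * t) s.
Proof.
rewrite (_ : (fun t : R => mu0 + s * t) = cst mu0 + (cst s \* id)); last by [].
apply: is_derive_eq.
by rewrite /= scaler0 addr0 add0r /GRing.scale /= mulr1.
Qed.

Lemma is_derive_cos_lin (mu0 s : R) :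
  is_derive (0:R) 1 (fun t : R => cos (mu0 + s * t)) (- sin mu0 * s).
Proof.
have hf := is_derive_lin mu0 s.
have df : derivable (fun t : R => mu0 + s * t) 0 1 by apply: ex_derive.
have dc : derivable (@cos R) (mu0 + s * 0) 1 by exact: derivable_cos.
have dcomp : derivable (cos \o (fun t : R => mu0 + s * t)) 0 1.
  apply/derivable1_diffP; apply: differentiable_comp; exact/derivable1_diffP.
apply: DeriveDef; first exact: dcomp.
rewrite -derive1E (derive1_comp df dc) !derive1E !derive_val.
by rewrite mulr0 addr0.
Qed.

Lemma is_derive_sin_lin (mu0 s : R) :
  is_derive (0:R) 1 (fun t : R => sin (mu0 + s * t)) (cos mu0 * s).
Proof.
have hf := is_derive_lin mu0 s.
have df : derivable (fun t : R => mu0 + s * t) 0 1 by apply: ex_derive.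
have dc : derivable (@sin R) (mu0 + s * 0) 1 by exact: derivable_sin.
have dcomp : derivable (sin \o (fun t : R => mu0 + s * t)) 0 1.
  apply/derivable1_diffP; apply: differentiable_comp; exact/derivable1_diffP.
apply: DeriveDef; first exact: dcomp.
rewrite -derive1E (derive1_comp df dc) !derive1E !derive_val.
by rewrite mulr0 addr0.
Qed.

Lemma is_derive_term (mu0 s X Y : R) :
  is_derive (0:R) 1 (fun t : R => cos (mu0 + s * t) * X + sin (mu0 + s * t) * Y)
    (s * (- sin mu0 * X + cos mu0 * Y)).
Proof.
have c1 : is_derive (0:R) (1:R) (@cst R R X) 0 by exact: is_derive_cst.
have c2 : is_derive (0:R) (1:R) (@cst R R Y) 0 by exact: is_derive_cst.
have h1 := is_deriveM (is_derive_cos_lin mu0 s) c1.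
have h2 := is_deriveM (is_derive_sin_lin mu0 s) c2.
have := is_deriveD h1 h2.
rewrite (_ : (fun t : R => cos (mu0 + s * t)) * cst X + (fun t : R => sin (mu0 + s * t)) * cst Y
   = (fun t : R => cos (mu0 + s * t) * X + sin (mu0 + s * t) * Y)) //.
move=> h; apply: (is_derive_eq h).
rewrite /= !scaler0 !add0r /GRing.scale /=; ring.
Qed.

Lemma mu_shift (m : 'I_4) (lam : 'rV[R]_3) (j : 'I_3) (t : R) :
  mu m (lam + t *: delta_mx 0 j) = mu m lam + sg m j * t.
Proof.
rewrite /mu.
under eq_bigr => i _ do rewrite !mxE mulrDr.
rewrite big_split /=; congr (_ + _).
rewrite (bigD1 j) //= big1 ?addr0.
  by rewrite !eqxx /= mulr1.
by move=> i /negbTE ij; rewrite ij mulr0 mulr0.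
Qed.

Lemma partial_trig (X Y : 'I_4 -> R) (j : 'I_3) (lam : 'rV[R]_3) :
  partial (fun l => \sum_(m < 4) (cos (mu m l) * X m + sin (mu m l) * Y m)) j lam =
  \sum_(m < 4) sg m j * (- sin (mu m lam) * X m + cos (mu m lam) * Y m).
Proof.
rewrite /partial.
under eq_fun => t do under eq_bigr => m _ do rewrite mu_shift.
have H := @is_derive_sum _ _ _ 4
  (fun m t => cos (mu m lam + sg m j * t) * X m + sin (mu m lam + sg m j * t) * Y m)
  0 1 _ (fun m => is_derive_term (mu m lam) (sg m j) (X m) (Y m)).
rewrite fct_sumE in H.
by rewrite derive1E; case: H.
Qed.
End S5.

Section S6.
Variable R : realType.
Local Notation C := (R[i]).
Local Notation cRe := complex.Re.
Local Notation cIm := complex.Im.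
Local Notation P := (@P R).
Local Notation bt := (@bt R).
Local Notation sg := (@sg R).
Local Notation mu := (@mu R).

Local Notation ee := (@ee R).
Local Notation V := (@V R).

Definition zz (pr : 'cV[C]_4) (m : 'I_4) : C :=
  (1/2 : R)%:C * \sum_(l < 4) (bt m l)%:C * pr l 0.

Lemma PmulV (pr : 'cV[C]_4) m k : (P m *m pr) k 0 = (bt m k)%:C * zz pr m.
Proof.
rewrite mxE /zz mulr_sumr mulr_sumr; apply: eq_bigr => l _.
by rewrite mxE !RCM; ring.
Qed.

Lemma modelE a b g d pb pg pd (lam : 'rV[R]_3) :
  model a b g d pb pg pd lam =
  V (fun m => ee m lam) (zz (probe a b g d pb pg pd)).
Proof.
rewrite /model UlamE; apply/matrixP => k c; rewrite (ord1 c) mulmx_suml summxE !mxE.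
apply: eq_bigr => m _.
by rewrite -scalemxAl mxE PmulV mulrA.
Qed.

Section Fixed.
Variable pr : 'cV[C]_4.
Definition XX (m k : 'I_4) := bt m k * cRe (zz pr m).
Definition YY (m k : 'I_4) := bt m k * cIm (zz pr m).

Lemma Re_V (lam : 'rV[R]_3) k :
  cRe (V (fun m => ee m lam) (zz pr) k 0) =
  \sum_(m < 4) (cos (mu m lam) * XX m k + sin (mu m lam) * YY m k).
Proof.
rewrite mxE Re_sum; apply: eq_bigr => m _.
by rewrite /ee /XX /YY !ReIm; ring.
Qed.

Lemma Im_V (lam : 'rV[R]_3) k :
  cIm (V (fun m => ee m lam) (zz pr) k 0) =
  \sum_(m < 4) (cos (mu m lam) * YY m k + sin (mu m lam) * (- XX m k)).
Proof.
rewrite mxE Im_sum; apply: eq_bigr => m _.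
by rewrite /ee /XX /YY !ReIm; ring.
Qed.
End Fixed.

Lemma dvecE a b g d pb pg pd (j : 'I_3) (lam : 'rV[R]_3) :
  dvec (model a b g d pb pg pd) j lam =
  V (fun m => - iu R * (sg m j)%:C * ee m lam) (zz (probe a b g d pb pg pd)).
Proof.
set pr := probe a b g d pb pg pd.
apply/matrixP => k c; rewrite (ord1 c) [LHS]mxE.
under eq_fun => l do rewrite modelE Re_V.
under [X in Complex _ (partial X _ _)]eq_fun => l do rewrite modelE Im_V.
rewrite !partial_trig.
apply: CeqP; rewrite ?ReC ?ImC mxE ?Re_sum ?Im_sum; apply: eq_bigr => m _;
  rewrite /ee /XX /YY !ReIm; ring.
Qed.
End S6.

Section S7.
Variable R : realType.
Local Notation C := (R[i]).
Local Notation cRe := complex.Re.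
Local Notation cIm := complex.Im.
Local Notation P := (@P R).
Local Notation bt := (@bt R).
Local Notation sg := (@sg R).
Local Notation mu := (@mu R).

Local Notation ee := (@ee R).
Local Notation V := (@V R).
Local Notation zz := (@zz R).

Lemma Re_ee m lam : cRe (ee m lam) = cos (mu m lam).
Proof. by rewrite /ee !ReIm; ring. Qed.
Lemma Im_ee m lam : cIm (ee m lam) = - sin (mu m lam).
Proof. by rewrite /ee !ReIm; ring. Qed.

Lemma ReJM (x y : C) : cRe (Num.conj x * y) = cRe x * cRe y + cIm x * cIm y.
Proof. by case: x => a b; case: y => c d /=; ring. Qed.
Lemma ImJM (x y : C) : cIm (Num.conj x * y) = cRe x * cIm y - cIm x * cRe y.
Proof. by case: x => a b; case: y => c d /=; ring. Qed.

Lemma ee_norm m lam : Num.conj (ee m lam) * ee m lam = 1.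
Proof.
apply: CeqP; rewrite ?ReJM ?ImJM !Re_ee !Im_ee ?Re1 ?Im1.
  transitivity (cos (mu m lam) ^+ 2 + sin (mu m lam) ^+ 2); first ring.
  exact: cos2Dsin2.
ring.
Qed.

Lemma cjmiu : Num.conj (- iu R) = iu R.
Proof. by apply: CeqP; rewrite ?ReJn ?ImJn !ReIm ?oppr0 ?opprK. Qed.

Lemma term1 (e : C) (s s' : R) (w : C) : Num.conj e * e = 1 ->
  Num.conj (- iu R * s%:C * e) * (- iu R * s'%:C * e) * w = (s * s')%:C * w.
Proof.
move=> h; rewrite !cjM cjR cjmiu.
transitivity ((iu R * (- iu R)) * (Num.conj e * e) * (s%:C * s'%:C) * w); first ring.
have hi : iu R * (- iu R) = 1 by apply: CeqP; rewrite !ReIm; ring.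
by rewrite hi h RCM; ring.
Qed.

Lemma term2 (e : C) (s : R) (w : C) : Num.conj e * e = 1 ->
  Num.conj (- iu R * s%:C * e) * e * w = iu R * s%:C * w.
Proof.
move=> h; rewrite !cjM cjR cjmiu.
transitivity (iu R * (Num.conj e * e) * s%:C * w); first ring.
by rewrite h; ring.
Qed.

Lemma term3 (e : C) (s : R) (w : C) : Num.conj e * e = 1 ->
  Num.conj e * (- iu R * s%:C * e) * w = - iu R * s%:C * w.
Proof.
move=> h.
transitivity (- iu R * (Num.conj e * e) * s%:C * w); first ring.
by rewrite h; ring.
Qed.

Definition Wr (pr : 'cV[C]_4) (m : 'I_4) : R :=
  2 * (cRe (zz pr m) ^+ 2 + cIm (zz pr m) ^+ 2).

Lemma WrE pr m : 2 * (Num.conj (zz pr m) * zz pr m) = (Wr pr m)%:C.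
Proof. by apply: CeqP; rewrite /Wr !ReIm2; ring. Qed.

Lemma qfiE a b g d pb pg pd (lam : 'rV[R]_3) :
  let w := Wr (probe a b g d pb pg pd) in
  qfi (model a b g d pb pg pd) lam =
  \matrix_(j, k) (4 * (\sum_(m < 4) sg m j * sg m k * w m
      - (\sum_(m < 4) sg m j * w m) * (\sum_(m < 4) sg m k * w m))).
Proof.
move=> w; apply/matrixP => j k; rewrite !mxE !dvecE modelE !braketV.
under eq_bigr => m _ do rewrite (term1 _ _ _ _ (ee_norm m lam)) WrE.
under [X in _ - X * _]eq_bigr => m _ do rewrite (term2 _ _ _ (ee_norm m lam)) WrE.
under [X in _ - _ * X]eq_bigr => m _ do rewrite (term3 _ _ _ (ee_norm m lam)) WrE.
have B1 : forall (u : 'I_4 -> R) (v : 'I_4 -> R),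
    \sum_(m < 4) (u m)%:C * (v m)%:C = (\sum_(m < 4) u m * v m)%:C :> C.
  by move=> u v; rewrite RC_sum; apply: eq_bigr => m _; rewrite RCM.
have B2 : forall (c : C) (u : 'I_4 -> R) (v : 'I_4 -> R),
    \sum_(m < 4) c * (u m)%:C * (v m)%:C = c * (\sum_(m < 4) u m * v m)%:C :> C.
  by move=> c u v; rewrite RC_sum mulr_sumr; apply: eq_bigr => m _; rewrite RCM mulrA.
rewrite B1 !B2 !ReIm /w; ring.
Qed.
End S7.

Section S8.
Variable R : realType.
Local Notation C := (R[i]).
Local Notation cRe := complex.Re.
Local Notation cIm := complex.Im.
Local Notation P := (@P R).
Local Notation bt := (@bt R).
Local Notation sg := (@sg R).
Local Notation mu := (@mu R).

Local Notation zz := (@zz R).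
Local Notation Wr := (@Wr R).

Definition wf (x0 x1 x2 x3 : R) (m : 'I_4) : R :=
  match nat_of_ord m with 0%N => x0 | 1%N => x1 | 2%N => x2 | _ => x3 end.

Lemma Re_expi (p : R) : cRe (expi p) = cos p. Proof. by []. Qed.
Lemma Im_expi (p : R) : cIm (expi p) = sin p. Proof. by []. Qed.

Lemma k0 (k x : R) : x = 1 -> k * (x - 1) = 0.
Proof. by move=> ->; rewrite subrr mulr0. Qed.
Lemma k1 (k l x y : R) : x = 1 -> y = 1 -> k * (x - 1) + l * (y - 1) = 0.
Proof. by move=> -> ->; rewrite subrr !mulr0 addr0. Qed.
Local Arguments complex.Re : simpl never.
Local Arguments complex.Im : simpl never.
Lemma Wr_vals a b g d pb pg pd :
  Wr (probe a b g d pb pg pd) =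
  wf ((a ^+ 2 + d ^+ 2 + 2 * a * d * cos pd) / 2)
     ((a ^+ 2 + d ^+ 2 - 2 * a * d * cos pd) / 2)
     ((b ^+ 2 + g ^+ 2 + 2 * b * g * cos (pb - pg)) / 2)
     ((b ^+ 2 + g ^+ 2 - 2 * b * g * cos (pb - pg)) / 2).
Proof.
have Hd := cos2Dsin2 pd; have Hb := cos2Dsin2 pb; have Hg := cos2Dsin2 pg.
apply/funext => m; rewrite /Wr /zz !big_ord_recr big_ord0 /= !mxE /=.
case: m => [[|[|[|[|m]]]] Hm] //=; rewrite /bt /wf /=.
all: rewrite !ReIm ?Re_expi ?Im_expi ?cosB.
all: apply: subr0_eq.
- transitivity (d ^+ 2 / 2 * (cos pd ^+ 2 + sin pd ^+ 2 - 1)); first by field.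
  by apply: k0; exact: Hd.
- transitivity (d ^+ 2 / 2 * (cos pd ^+ 2 + sin pd ^+ 2 - 1)); first by field.
  by apply: k0; exact: Hd.
- transitivity (b ^+ 2 / 2 * (cos pb ^+ 2 + sin pb ^+ 2 - 1)
     + g ^+ 2 / 2 * (cos pg ^+ 2 + sin pg ^+ 2 - 1)); first by field.
  by apply: k1; [exact: Hb | exact: Hg].
- transitivity (b ^+ 2 / 2 * (cos pb ^+ 2 + sin pb ^+ 2 - 1)
     + g ^+ 2 / 2 * (cos pg ^+ 2 + sin pg ^+ 2 - 1)); first by field.
  by apply: k1; [exact: Hb | exact: Hg].
Qed.
End S8.

Section S9.
Variable R : realType.
Local Notation C := (R[i]).
Local Notation cRe := complex.Re.
Local Notation cIm := complex.Im.
Local Notation P := (@P R).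
Local Notation bt := (@bt R).
Local Notation sg := (@sg R).
Local Notation mu := (@mu R).

Local Notation wf := (@wf R).

Definition Qm (w : 'I_4 -> R) : 'M[R]_3 :=
  \matrix_(j, k) (4 * (\sum_(m < 4) sg m j * sg m k * w m
      - (\sum_(m < 4) sg m j * w m) * (\sum_(m < 4) sg m k * w m))).

Lemma detQ (x0 x1 x2 x3 : R) : x0 + x1 + x2 + x3 = 1 ->
  \det (Qm (wf x0 x1 x2 x3)) = 16384 * (x0 * x1 * x2 * x3).
Proof.
move=> hs.
have -> : x3 = 1 - x0 - x1 - x2 by rewrite -hs; ring.
rewrite (expand_det_row _ ord0) !big_ord_recr big_ord0 /= /cofactor.
rewrite !(expand_det_row _ ord0) !big_ord_recr !big_ord0 /= /cofactor.
rewrite !det_mx11 !mxE /=.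
rewrite !big_ord_recr !big_ord0 /sg /wf /=.
ring.
Qed.
End S9.

Section S10.
Variable R : realType.
Local Notation C := (R[i]).
Local Notation cRe := complex.Re.
Local Notation cIm := complex.Im.
Local Notation P := (@P R).
Local Notation bt := (@bt R).
Local Notation sg := (@sg R).
Local Notation mu := (@mu R).

Local Notation wf := (@wf R).
Local Notation Qm := (@Qm R).

Lemma trQ (x0 x1 x2 x3 : R) : x0 + x1 + x2 + x3 = 1 ->
  \sum_(i < 3) cofactor (Qm (wf x0 x1 x2 x3)) i i =
  768 * (x1 * x2 * x3 + x0 * x2 * x3 + x0 * x1 * x3 + x0 * x1 * x2).
Proof.
move=> hs.
have -> : x3 = 1 - x0 - x1 - x2 by rewrite -hs; ring.
rewrite !big_ord_recr big_ord0 /= /cofactor.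
rewrite !(expand_det_row _ ord0) !big_ord_recr !big_ord0 /= /cofactor.
rewrite !det_mx11 !mxE /=.
rewrite !big_ord_recr !big_ord0 /sg /wf /=.
ring.
Qed.

Lemma c2 (x : R) : cos (2 * x) = 2 * cos x ^+ 2 - 1.
Proof. by rewrite mulr_natl cos_mulr2n mulr_natl. Qed.
End S10.

Local Close Scope complex_scope.

Theorem mainTheorem2 (R : realType) (a b g d pb pg pd : R) (lam : 'rV[R]_3) :
  0 <= a <= 1 -> 0 <= b <= 1 -> 0 <= g <= 1 -> 0 <= d <= 1 ->
  a ^+ 2 + b ^+ 2 + g ^+ 2 + d ^+ 2 = 1 ->
  0 <= pb < 2 * pi -> 0 <= pg < 2 * pi -> 0 <= pd < 2 * pi ->
  let Q := qfi (model a b g d pb pg pd) lam in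
  \det Q = 1024 * (a ^+ 4 + d ^+ 4 - 2 * a ^+ 2 * d ^+ 2 * cos (2 * pd))
                * (b ^+ 4 + g ^+ 4 - 2 * b ^+ 2 * g ^+ 2 * cos (2 * (pb - pg)))
  /\
  (Q \in unitmx ->
   \tr (invmx Q) =
     3 / 16 * ((a ^+ 2 + d ^+ 2) /
                 (a ^+ 4 - 2 * a ^+ 2 * d ^+ 2 * cos (2 * pd) + d ^+ 4)
             + (b ^+ 2 + g ^+ 2) /
                 (b ^+ 4 - 2 * b ^+ 2 * g ^+ 2 * cos (2 * (pb - pg)) + g ^+ 4))).
Proof.
move=> _ _ _ _ hn _ _ _ Q.
set x0 := (a ^+ 2 + d ^+ 2 + 2 * a * d * cos pd) / 2.
set x1 := (a ^+ 2 + d ^+ 2 - 2 * a * d * cos pd) / 2.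
set x2 := (b ^+ 2 + g ^+ 2 + 2 * b * g * cos (pb - pg)) / 2.
set x3 := (b ^+ 2 + g ^+ 2 - 2 * b * g * cos (pb - pg)) / 2.
have QE : Q = Qm R (wf R x0 x1 x2 x3).
  by rewrite /Q (@qfiE R a b g d pb pg pd lam) Wr_vals.
have hs : x0 + x1 + x2 + x3 = 1.
  transitivity (a ^+ 2 + b ^+ 2 + g ^+ 2 + d ^+ 2); last exact: hn.
  by rewrite /x0 /x1 /x2 /x3; field.
have D1 : a ^+ 4 + d ^+ 4 - 2 * a ^+ 2 * d ^+ 2 * cos (2 * pd) = 4 * x0 * x1.
  by rewrite c2 /x0 /x1; field.
have D2 : b ^+ 4 + g ^+ 4 - 2 * b ^+ 2 * g ^+ 2 * cos (2 * (pb - pg)) = 4 * x2 * x3.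
  by rewrite c2 /x2 /x3; field.
have D1' : a ^+ 4 - 2 * a ^+ 2 * d ^+ 2 * cos (2 * pd) + d ^+ 4 = 4 * x0 * x1.
  by rewrite -D1; ring.
have D2' : b ^+ 4 - 2 * b ^+ 2 * g ^+ 2 * cos (2 * (pb - pg)) + g ^+ 4 = 4 * x2 * x3.
  by rewrite -D2; ring.
have N1 : a ^+ 2 + d ^+ 2 = x0 + x1 by rewrite /x0 /x1; field.
have N2 : b ^+ 2 + g ^+ 2 = x2 + x3 by rewrite /x2 /x3; field.
have dQ : \det Q = 16384 * (x0 * x1 * x2 * x3) by rewrite QE detQ.
split.
  by rewrite dQ D1 D2; ring.
move=> hQ; clearbody x0 x1 x2 x3.
have hdet : \det Q != 0 by rewrite -unitfE -unitmxE.
have hx : x0 * x1 * x2 * x3 != 0.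
  by apply: contraNneq hdet; rewrite dQ => ->; rewrite mulr0.
move: hx; rewrite !mulf_eq0 !negb_or => /andP[/andP[/andP[h0 h1] h2] h3].
rewrite /invmx hQ mxtraceZ /mxtrace.
under eq_bigr => i _ do rewrite mxE.
rewrite QE trQ // -QE dQ D1' D2' N1 N2.
by field; rewrite h0 h1 h2 h3.
Qed.
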